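(* For hypergraphs $H=(X,E)$ of VC dimension at most $d$, \textsc{Max Partial VC Dimension} is $|E|^{(d-1)/d}$-approximable in polynomial time.
   Context: For a hypergraph $H=(X,E)$ and $C\subseteq X$, the number of equivalence classes induced by $C$ is $|\{e\cap C: e\in E\}|$. The VC dimension of $H$ is the maximum size of a set $C\subseteq X$ such that every subset of $C$ equals $e\cap C$ for some $e\in E$. \textsc{Max Partial VC Dimension}: given $H$ and an integer $k$, find $C\subseteq X$ of size $k$ maximizing the number of induced classes. An $r$-approximation algorithm returns a feasible solution of value at least $opt/r$. *)

(* Defs.v *)
From mathcomp Require Import all_boot.
Set Implicit Arguments. Unset Strict Implicit. Unset Printing Implicit Defensive.

(* number of equivalence classes induced by C: |{ e :&: C : e in E }| *)
Definition nb_classes (n : nat) (E : {set {set 'I_n}}) (C : {set 'I_n}) : nat :=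
  #|[set e :&: C | e in E]|.

Definition shattered (n : nat) (E : {set {set 'I_n}}) (C : {set 'I_n}) : bool :=
  [forall D : {set 'I_n}, (D \subset C) ==> [exists e in E, e :&: C == D]].

Definition vc_dim (n : nat) (E : {set {set 'I_n}}) : nat :=
  \max_(C : {set 'I_n} | shattered E C) #|C|.

Definition opt_pvc (n : nat) (E : {set {set 'I_n}}) (k : nat) : nat :=
  \max_(C : {set 'I_n} | #|C| == k) nb_classes E C.

Inductive instr : Type :=
| IConst of nat & nat
| IAdd   of nat & nat & nat
| ISub   of nat & nat & nat
| ILoad  of nat & nat
| IStore of nat & nat
| IJz    of nat & nat
| IHalt.

Definition program := seq instr.
Definition memory := nat -> nat.

Definition upd (m : memory) (r v : nat) : memory :=
  fun i => if i == r then v else m i.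

Definition step (P : program) (pc : nat) (m : memory) : option (nat * memory) :=
  match nth IHalt P pc with
  | IConst r v => Some (pc.+1, upd m r v)
  | IAdd r a b => Some (pc.+1, upd m r (m a + m b))
  | ISub r a b => Some (pc.+1, upd m r (m a - m b))
  | ILoad r a => Some (pc.+1, upd m r (m (m a)))
  | IStore a b => Some (pc.+1, upd m (m a) (m b))
  | IJz a t => Some (if m a == 0 then t else pc.+1, m)
  | IHalt => None
  end.

Fixpoint exec (P : program) (t : nat) (pc : nat) (m : memory) : option memory :=
  match step P pc m with
  | None => Some m
  | Some (pc', m') => if t is t'.+1 then exec P t' pc' m' else None
  end.

(* mem[0] = n, mem[1] = |E|, mem[2] = k, and for j < |E| * n,
   mem[3 + j] = 1 iff vertex (j %% n) belongs to the (j %/ n)-th edge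
   (edges listed in the order enum E); all other registers are 0. *)
Definition encode (n : nat) (E : {set {set 'I_n}}) (k : nat) : memory :=
  fun i =>
    if i == 0 then n else if i == 1 then #|E| else if i == 2 then k else
    let j := i - 3 in
    if j < #|E| * n then
      nat_of_bool [exists x : 'I_n, (val x == j %% n) && (x \in nth set0 (enum E) (j %/ n))]
    else 0.

Definition input_size (n : nat) (E : {set {set 'I_n}}) (k : nat) : nat :=
  3 + n + #|E| * n + k.

Definition decode (n : nat) (m : memory) : {set 'I_n} :=
  [set x : 'I_n | m (val x) != 0].

(* Main.v *)
Require Import Defs.
From mathcomp Require Import all_boot zify ring.
From Stdlib Require Import FunctionalExtensionality.
Set Implicit Arguments. Unset Strict Implicit. Unset Printing Implicit Defensive.

Definition shb (n : nat) (F : {set {set 'I_n}}) := [set S | shattered F S].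

Lemma shatteredP (n : nat) (F : {set {set 'I_n}}) (S : {set 'I_n}) :
  reflect (forall D : {set 'I_n}, D \subset S -> exists2 A, A \in F & A :&: S = D) (shattered F S).
Proof.
apply: (iffP forallP) => [H D HD | H D].
  move: (H D); rewrite HD /= => /existsP [A /andP [HA /eqP HAS]]; by exists A.
apply/implyP => HD; have [A HA HAS] := H D HD; apply/existsP; exists A; by rewrite HA HAS eqxx.
Qed.

Lemma shb0 (n : nat) (F : {set {set 'I_n}}) : F != set0 -> set0 \in shb F.
Proof.
case/set0Pn => A HA; rewrite inE; apply/shatteredP => D; rewrite subset0 => /eqP ->.
by exists A => //; rewrite setI0.
Qed.

Lemma shb_sub (n : nat) (F : {set {set 'I_n}}) (S0 T : {set 'I_n}) :
  (forall A, A \in F -> A \subset S0) -> T \in shb F -> T \subset S0.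
Proof.
move=> HF; rewrite inE => /shatteredP /(_ T (subxx T)) [A HA HAT].
apply: subset_trans (HF A HA); by rewrite -HAT subsetIl.
Qed.

Lemma pajor (n : nat) (N : nat) : forall (S0 : {set 'I_n}) (F : {set {set 'I_n}}),
  #|S0| <= N -> (forall A, A \in F -> A \subset S0) -> #|F| <= #|shb F|.
Proof.
elim: N => [|N IH] S0 F HS0 HF.
- have HS : S0 = set0 by apply/eqP; rewrite -cards_eq0 -leqn0.
  have HF1 : F \subset [set set0].
    apply/subsetP => A HA; rewrite inE; have := HF A HA; by rewrite HS subset0.
  case: (eqVneq F set0) => [-> | HFn]; first by rewrite cards0.
  apply: leq_trans (subset_leq_card HF1) _; rewrite cards1 card_gt0.
  by apply/set0Pn; exists set0; apply: shb0.
case: (set_0Vmem S0) => [HS | [x Hx]].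
  have HF1 : F \subset [set set0].
    apply/subsetP => A HA; rewrite inE; have := HF A HA; by rewrite HS subset0.
  case: (eqVneq F set0) => [-> | HFn]; first by rewrite cards0.
  apply: leq_trans (subset_leq_card HF1) _; rewrite cards1 card_gt0.
  by apply/set0Pn; exists set0; apply: shb0.
set S1 := S0 :\ x.
have HS1 : #|S1| <= N.
  by rewrite -ltnS (cardsD1 x S0) Hx add1n ltnS in HS0.
set P := [set A : {set 'I_n} | x \in A].
set Fx := F :&: P.
set F0 := F :\: P.
set F1 := [set A :\ x | A in Fx].
have HF0 : forall A, A \in F0 -> A \subset S1.
  move=> A; rewrite !inE => /andP [HxA HA].
  by rewrite subsetD1 HxA (HF A HA).
have HF1' : forall A, A \in F1 -> A \subset S1.
  move=> A /imsetP [B HB ->]; move: HB; rewrite !inE => /andP [HB _].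
  by apply: setSD; apply: HF.
have cF1 : #|F1| = #|Fx|.
  apply: card_in_imset => A B; rewrite !inE => /andP [_ HA] /andP [_ HB] HAB.
  by rewrite -(setD1K HA) -(setD1K HB) HAB.
have IH1 : #|F0 :|: F1| <= #|shb (F0 :|: F1)|.
  apply: (IH S1) => // A; rewrite inE => /orP [] ?; by [apply: HF0 | apply: HF1'].
have IH2 : #|F0 :&: F1| <= #|shb (F0 :&: F1)|.
  apply: (IH S1) => // A; rewrite inE => /andP [] ? ?; by apply: HF0.
have xS1 : x \notin S1 by rewrite !inE eqxx.
have nx1 : forall T, T \in shb (F0 :|: F1) -> x \notin T.
  move=> T HT; apply: contra xS1; apply/subsetP.
  apply: (shb_sub _ HT) => A; rewrite inE => /orP [] ?; by [apply: HF0 | apply: HF1'].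
have nx2 : forall T, T \in shb (F0 :&: F1) -> x \notin T.
  move=> T HT; apply: contra xS1; apply/subsetP.
  apply: (shb_sub _ HT) => A; rewrite inE => /andP [] ? ?; by apply: HF0.
set G2 := [set x |: T | T in shb (F0 :&: F1)].
have cG2 : #|G2| = #|shb (F0 :&: F1)|.
  apply: card_in_imset => A B HA HB HAB.
  by rewrite -(setU1K (nx2 _ HA)) -(setU1K (nx2 _ HB)) HAB.
have dis : shb (F0 :|: F1) :&: G2 = set0.
  apply/setP => T; rewrite in_set0; apply/negbTE/setIP => [[HT /imsetP [U _ HU]]].
  by move: (nx1 _ HT); rewrite HU setU11.
have sub : shb (F0 :|: F1) :|: G2 \subset shb F.
  apply/subsetP => T; rewrite inE => /orP [HT | /imsetP [U HU ->]].
  - have HxT := nx1 _ HT.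
    move: HT; rewrite !inE => /shatteredP HT; apply/shatteredP => D HD.
    have [A HA HAD] := HT D HD.
    move: HA; rewrite inE => /orP [HA | /imsetP [B HB HAB]].
      by exists A => //; move: HA; rewrite inE => /andP [].
    exists B; first by move: HB; rewrite inE => /andP [].
    rewrite -HAD HAB; apply/setP => y; rewrite !inE.
    case: (eqVneq y x) => [-> | //]; by rewrite (negbTE HxT) andbF.
  - have HxU := nx2 _ HU.
    move: HU; rewrite !inE => /shatteredP HU; apply/shatteredP => D HD.
    have HD' : D :\ x \subset U.
      apply/subsetP => y; rewrite !inE => /andP [Hy HyD].
      by have := subsetP HD y HyD; rewrite !inE (negbTE Hy).
    have [A HA HAD] := HU _ HD'.
    move: HA; rewrite inE => /andP [HA0 HA1].
    move: HA0; rewrite !inE => /andP [HxA HAF].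
    case: (boolP (x \in D)) => HxD.
    + move: HA1 => /imsetP [B HB HAB]; move: HB; rewrite !inE => /andP [HBF HxB].
      exists B => //; apply/setP => y; rewrite !inE.
      case: (eqVneq y x) => [-> | Hyx]; first by rewrite HxB HxD.
      move/setP: HAD => /(_ y); rewrite !inE HAB !inE Hyx /=.
      by move=> <-.
    + exists A => //; apply/setP => y; rewrite !inE.
      case: (eqVneq y x) => [-> | Hyx]; first by rewrite (negbTE HxA) (negbTE HxD).
      move/setP: HAD => /(_ y); rewrite !inE Hyx /=.
      by move=> <-.
have cF : #|F| = #|F0| + #|F1|.
  by rewrite cF1 addnC cardsID.
rewrite cF -cardsUI.
apply: leq_trans (leq_add IH1 IH2) _.
rewrite -cG2 -cardsUI dis cards0 addn0.
exact: subset_leq_card.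
Qed.

Lemma small_sets (n d : nat) (C : {set 'I_n}) :
  #|[set T : {set 'I_n} | (T \subset C) && (#|T| <= d)]| <= (#|C|.+1) ^ d.
Proof.
set Sm := [set T : {set 'I_n} | _].
set Rs : {set option 'I_n} := None |: [set Some y | y in C].
have cR : #|Rs| = #|C|.+1.
  rewrite cardsU1 card_imset; last by move=> ? ? [].
  by case: imsetP => // [[y _]].
pose f (T : {set 'I_n}) : {ffun 'I_d -> option 'I_n} := [ffun i : 'I_d => onth (enum T) i].
have finj : {in Sm &, injective f}.
  move=> T T'; rewrite !inE => /andP [_ HT] /andP [_ HT'] Hf.
  rewrite -(set_enum T) -(set_enum T'); suff -> : enum T = enum T' by [].
  apply: eq_from_onth_le => i; rewrite -!cardE leq_max => Hi.
  have Hid : i < d.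
    by case/orP: Hi => Hi; [apply: leq_trans Hi HT | apply: leq_trans Hi HT'].
  by move/ffunP: Hf => /(_ (Ordinal Hid)); rewrite !ffunE.
rewrite -(card_in_imset finj) -cR.
have -> : #|Rs| ^ d = #|[set g : {ffun 'I_d -> option 'I_n} | g \in ffun_on Rs]|.
  by rewrite [RHS]cardsE card_ffun_on card_ord.
apply: subset_leq_card; apply/subsetP => g /imsetP [T HT ->].
rewrite inE; apply/ffun_onP => i; rewrite ffunE.
case Ho: (onth _ _) => [y|]; last by rewrite !inE.
rewrite !inE; apply/orP; right; apply/imsetP; exists y => //.
move: HT; rewrite inE => /andP [/subsetP HTC _]; apply: HTC.
have : y \in enum T by apply/onthP; exists i.
by rewrite mem_enum.
Qed.

Lemma nb_leE (n : nat) (E : {set {set 'I_n}}) C : nb_classes E C <= #|E|.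
Proof. exact: leq_imset_card. Qed.

Lemma nb_mono (n : nat) (E : {set {set 'I_n}}) (C C' : {set 'I_n}) :
  C \subset C' -> nb_classes E C <= nb_classes E C'.
Proof.
move=> HC; rewrite /nb_classes.
have -> : [set e :&: C | e in E] = [set X :&: C | X in [set e :&: C' | e in E]].
  rewrite -imset_comp; apply: eq_imset => e /=.
  by rewrite -setIA (setIidPr HC).
exact: leq_imset_card.
Qed.

Lemma nb_split (n : nat) (E : {set {set 'I_n}}) (C : {set 'I_n}) (A B : {set 'I_n}) x :
  A \in E -> B \in E -> A :&: C = B :&: C -> A :&: (x |: C) != B :&: (x |: C) ->
  nb_classes E C < nb_classes E (x |: C).
Proof.
move=> HA HB HAB HAB'; rewrite /nb_classes.
have -> : [set e :&: C | e in E] = [set X :&: C | X in [set e :&: (x |: C) | e in E]].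
  rewrite -imset_comp; apply: eq_imset => e /=.
  by rewrite -setIA (setIidPr (subsetUr _ _)).
rewrite ltn_neqAle leq_imset_card andbT; apply/imset_injP => Hinj.
move/eqP: HAB'; apply; apply: Hinj; try by apply: imset_f.
by rewrite -!setIA (setIidPr (subsetUr _ _)).
Qed.

Lemma nb_full (n : nat) (E : {set {set 'I_n}}) (C : {set 'I_n}) :
  {in E &, forall A B, A :&: C = B :&: C -> A = B} -> nb_classes E C = #|E|.
Proof. move=> H; exact: card_in_imset. Qed.

Lemma nb_set0 (n : nat) (E : {set {set 'I_n}}) : E != set0 -> nb_classes E set0 = 1.
Proof.
case/set0Pn => e He; rewrite /nb_classes.
have -> : [set A :&: set0 | A in E] = [set set0 : {set 'I_n}].
  apply/setP => X; rewrite inE; apply/imsetP/eqP => [[A _ ->] | ->]; first by rewrite setI0.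
  by exists e => //; rewrite setI0.
exact: cards1.
Qed.

Lemma nb_le_pow (n d : nat) (E : {set {set 'I_n}}) (C : {set 'I_n}) :
  vc_dim E <= d -> nb_classes E C <= #|C|.+1 ^ d.
Proof.
move=> Hd; rewrite /nb_classes.
set G := [set e :&: C | e in E].
have HG : forall A, A \in G -> A \subset C by move=> A /imsetP [e _ ->]; exact: subsetIr.
apply: leq_trans (pajor (leqnn #|C|) HG) _.
apply: leq_trans (small_sets d C); apply: subset_leq_card; apply/subsetP => T HT.
rewrite inE (shb_sub HG HT) /=.
apply: leq_trans Hd; rewrite /vc_dim; apply: (leq_bigmax_cond (P := fun T => shattered E T) (F := fun T => #|T|)).
move: HT; rewrite inE => /shatteredP HT; apply/shatteredP => D HD.
have [A HA HAD] := HT D HD; move: HA => /imsetP [e He HeA].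
exists e => //; rewrite -HAD HeA -setIA (setIidPr (shb_sub HG _)) //.
by rewrite inE; apply/shatteredP.
Qed.

Lemma leq_expb m n e : m <= n -> m ^ e <= n ^ e.
Proof. move=> H; elim: e => // e IH; rewrite !expnS; exact: leq_mul. Qed.

Lemma final_bound (n d k : nat) (E : {set {set 'I_n}}) (C : {set 'I_n}) :
  1 <= d -> vc_dim E <= d -> #|C| = k ->
  (k.+1 <= nb_classes E C \/ #|E| <= nb_classes E C) ->
  opt_pvc E k ^ d <= nb_classes E C ^ d * #|E| ^ (d - 1).
Proof.
move=> Hd1 Hd HC Hnb.
have Hopt1 : opt_pvc E k <= #|E|.
  by apply/bigmax_leqP => C' _; exact: nb_leE.
have Hopt2 : opt_pvc E k <= k.+1 ^ d.
  apply/bigmax_leqP => C' /eqP HC'; rewrite -HC'; exact: nb_le_pow.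
case: Hnb => Hnb.
- have -> : opt_pvc E k ^ d = opt_pvc E k * opt_pvc E k ^ (d - 1).
    by rewrite -expnS subn1 prednK.
  apply: leq_mul; last by apply: leq_expb.
  apply: leq_trans Hopt2 _; by apply: leq_expb.
- case: (posnP #|E|) => HE.
    move: Hopt1; rewrite HE leqn0 => /eqP ->; by rewrite exp0n.
  rewrite -[X in X <= _]muln1; apply: leq_mul.
    apply: leq_expb; exact: leq_trans Hopt1 Hnb.
  by rewrite expn_gt0 HE.
Qed.

Section Model.
Variables (n : nat) (E : {set {set 'I_n}}) (k : nat).

Definition ed i := nth set0 (enum E) i.
Definition inb (A : {set 'I_n}) (x : nat) : nat := [exists y : 'I_n, (val y == x) && (y \in A)].
Definition addv (C : {set 'I_n}) (x : nat) : {set 'I_n} := [set y | (y \in C) || (val y == x)].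
Definition dfb (C A B : {set 'I_n}) X : bool :=
  [exists y : 'I_n, [&& val y < X, y \in C & (y \in A) != (y \in B)]].
Fixpoint spf (C A B : {set 'I_n}) X : nat :=
  if X is X'.+1 then
    (if (inb A X' != inb B X') && (inb C X' == 0) then X'.+1 else spf C A B X')
  else 0.

Definition pstep (st : {set 'I_n} * nat) i j : {set 'I_n} * nat :=
  let: (C, cnt) := st in
  let s := spf C (ed i) (ed j) n in
  if [&& ~~ dfb C (ed i) (ed j) n, s != 0 & k - cnt != 0] then (addv C s.-1, cnt.+1)
  else (C, cnt).

Fixpoint iloop st j I r := if r is r'.+1 then iloop (pstep st I j) j I.+1 r' else st.
Fixpoint jloop st J r := if r is r'.+1 then jloop (iloop st J 0 #|E|) J.+1 r' else st.

Definition padstep (st : {set 'I_n} * nat) x : {set 'I_n} * nat :=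
  let: (C, cnt) := st in
  if (k - cnt != 0) && (inb C x == 0) then (addv C x, cnt.+1) else (C, cnt).
Fixpoint ploop st X r := if r is r'.+1 then ploop (padstep st X) X.+1 r' else st.

Lemma inb_ord (A : {set 'I_n}) (y : 'I_n) : inb A y = (y \in A).
Proof.
rewrite /inb; congr nat_of_bool; apply/existsP/idP => [[z /andP [/eqP Hz HzA]] | Hy].
  by have <- : z = y by apply: val_inj.
by exists y; rewrite eqxx Hy.
Qed.

Lemma inb_ge (A : {set 'I_n}) x : n <= x -> inb A x = 0.
Proof.
move=> Hx; rewrite /inb; case: existsP => // [[z /andP [/eqP Hz _]]].
by move: (ltn_ord z); rewrite Hz ltnNge Hx.
Qed.

Lemma inb_le1 (A : {set 'I_n}) x : inb A x <= 1.
Proof. by rewrite /inb; case: existsP. Qed.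

Lemma addv_ord (C : {set 'I_n}) x (Hx : x < n) : addv C x = (Ordinal Hx) |: C.
Proof.
by apply/setP => y; rewrite !inE orbC; congr (_ || _).
Qed.

Lemma inb_addv (C : {set 'I_n}) x y : x < n -> inb (addv C x) y = if y == x then 1 else inb C y.
Proof.
move=> Hx; case: (ltnP y n) => Hy.
  have -> : y = val (Ordinal Hy) by [].
  rewrite !inb_ord !inE /=; case: eqP => _; by rewrite ?orbT ?orbF.
rewrite !inb_ge //; case: eqP => // Hyx; by move: Hx; rewrite -Hyx ltnNge Hy.
Qed.

Lemma addv_card (C : {set 'I_n}) x : x < n -> inb C x = 0 -> #|addv C x| = #|C|.+1.
Proof.
move=> Hx HC; rewrite (addv_ord _ Hx) cardsU1.
have -> : Ordinal Hx \notin C.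
  by apply/negP => HC'; move: HC; rewrite -[x]/(val (Ordinal Hx)) inb_ord HC'.
done.
Qed.

Lemma addv_sub (C : {set 'I_n}) x : C \subset addv C x.
Proof. by apply/subsetP => y Hy; rewrite inE Hy. Qed.

Lemma spf_zero C A B X : spf C A B X = 0 ->
  forall y : 'I_n, val y < X -> y \notin C -> (y \in A) = (y \in B).
Proof.
elim: X => [|X IH] //= H y Hy HyC.
move: H; case: ifP => // /negbT; rewrite negb_and negbK.
rewrite -[inb C X == 0]negbK => Hc Hs.
case: (ltngtP y X) => Hyx.
- exact: IH.
- by move: Hy; rewrite ltnS leqNgt Hyx.
- move: Hc; rewrite -Hyx !inb_ord (negbTE HyC) /=.
  by case: (y \in A); case: (y \in B).
Qed.

Lemma spf_succ C A B X s : spf C A B X = s.+1 ->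
  [/\ s < n, inb C s = 0 & inb A s != inb B s].
Proof.
elim: X => [|X IH] //=.
case: ifP => [/andP [HAB /eqP HC] [<-] | _]; last exact: IH.
split=> //; case: (ltnP X n) => // HX.
by move: HAB; rewrite !inb_ge.
Qed.

Lemma dfb_false C A B : ~~ dfb C A B n -> A :&: C = B :&: C.
Proof.
move=> H; apply/setP => y; rewrite !inE.
case HyC: (y \in C); rewrite ?andbF ?andbT //.
apply/eqP; apply: contraNT H => Hne; apply/existsP; exists y.
by rewrite ltn_ord HyC Hne.
Qed.

Lemma ed_in i : i < #|E| -> ed i \in E.
Proof. by move=> Hi; rewrite -mem_enum; apply: mem_nth; rewrite -cardE. Qed.

Lemma ed_inj i j : i < #|E| -> j < #|E| -> ed i = ed j -> i = j.
Proof.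
move=> Hi Hj H; apply/eqP; have Hs : size (enum E) = #|E| by rewrite cardE.
by rewrite -(nth_uniq set0 _ _ (enum_uniq (mem E))) ?Hs // -/(ed i) -/(ed j) H.
Qed.

Definition Inv (st : {set 'I_n} * nat) :=
  [/\ #|st.1| = st.2, st.2 <= k & (#|E| = 0 \/ st.2.+1 <= nb_classes E st.1)].

Definition Dist (st : {set 'I_n} * nat) i j :=
  (ed i :&: st.1 != ed j :&: st.1) \/ i = j \/ st.2 = k.

Lemma pstep_cases st i j :
  pstep st i j = st \/
  exists s, [/\ pstep st i j = (addv st.1 s, st.2.+1), s < n, inb st.1 s = 0,
     inb (ed i) s != inb (ed j) s & ed i :&: st.1 = ed j :&: st.1 /\ st.2 < k].
Proof.
case: st => C cnt; rewrite /pstep.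
case: ifP => [/and3P [Hdf Hs Hk] | _]; last by left.
right; case E1: (spf C (ed i) (ed j) n) Hs => [|s] // _.
have [Hsn HC HAB] := spf_succ E1.
exists s; split=> //; split; first exact: dfb_false.
by rewrite subn_eq0 -ltnNge in Hk.
Qed.

Lemma Inv_pstep st i j : i < #|E| -> j < #|E| -> Inv st -> Inv (pstep st i j).
Proof.
move=> Hi Hj [H1 H2 H3].
case: (pstep_cases st i j) => [-> | [s [-> Hsn HC HAB [Htr Hk]]]]; first by split.
split=> /=.
- by rewrite addv_card // H1.
- exact: Hk.
- case: H3 => H3; [by left | right].
  apply: leq_ltn_trans H3 _; rewrite (addv_ord _ Hsn).
  apply: (nb_split (ed_in Hi) (ed_in Hj) Htr).
  apply/negP => /eqP /setP /(_ (Ordinal Hsn)); rewrite !inE eqxx /= !andbT.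
  by move=> Heq; move: HAB; rewrite -[s]/(val (Ordinal Hsn)) !inb_ord Heq eqxx.
Qed.

Lemma tr_mono (A B C C' : {set 'I_n}) :
  C \subset C' -> A :&: C != B :&: C -> A :&: C' != B :&: C'.
Proof.
move=> HC; apply: contra => /eqP H.
by rewrite -(setIidPr HC) !setIA H.
Qed.

Lemma Dist_pstep st i j i' j' : Inv st -> Dist st i j -> Dist (pstep st i' j') i j.
Proof.
move=> [H1 H2 H3] HD.
case: (pstep_cases st i' j') => [-> // | [s [-> Hsn HC HAB [Htr Hk]]]].
rewrite /Dist /=; case: HD => [HD | [HD | HD]].
- left; apply: tr_mono HD; exact: addv_sub.
- by right; left.
- by move: Hk; rewrite HD ltnn.
Qed.

Lemma Dist_pstep_self st i j : i < #|E| -> j < #|E| -> Inv st -> Dist (pstep st i j) i j.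
Proof.
move=> Hi Hj [H1 H2 H3]; case: st H1 H2 H3 => C cnt /= H1 H2 H3.
rewrite /Dist /pstep.
case: ifP => [/and3P [Hdf Hs Hk] | Hno].
- left => /=.
  case E1: (spf C (ed i) (ed j) n) Hs => [|s] // _.
  have [Hsn HC HAB] := spf_succ E1.
  apply/negP => /eqP /setP /(_ (Ordinal Hsn)); rewrite /addv !inE eqxx /= !orbT !andbT.
  by move=> Heq; move: HAB; rewrite -[s]/(val (Ordinal Hsn)) !inb_ord Heq eqxx.
- case Hdf: (dfb C (ed i) (ed j) n).
    left => /=; move/existsP: Hdf => [y /and3P [_ HyC Hne]].
    apply/negP => /eqP /setP /(_ y); rewrite !inE HyC !andbT => Heq.
    by move: Hne; rewrite Heq eqxx.
  move: Hno; rewrite Hdf /=.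
  case Hs: (spf C (ed i) (ed j) n == 0) => /= Hk.
    right; left; apply: ed_inj => //; apply/setP => y.
    case HyC: (y \in C).
      move/setP: (dfb_false (negbT Hdf)) => /(_ y).
      by rewrite !inE HyC !andbT.
    by apply: (spf_zero (eqP Hs)); rewrite ?ltn_ord ?HyC.
  right; right => /=; apply/eqP; rewrite eqn_leq H2 /=.
  by move/negbT: Hk; rewrite negbK subn_eq0.
Qed.

Lemma iloop_ok r : forall st I J, I + r = #|E| -> J < #|E| -> Inv st ->
  (forall i' j', i' < #|E| -> j' < #|E| -> (j' < J \/ (j' = J /\ i' < I)) -> Dist st i' j') ->
  Inv (iloop st J I r) /\
  (forall i' j', i' < #|E| -> j' < #|E| -> (j' < J \/ (j' = J /\ i' < #|E|)) ->
     Dist (iloop st J I r) i' j').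
Proof.
elim: r => [|r IH] st I J HI HJ Hinv HD /=.
  by rewrite addn0 in HI; subst I; split.
have HIm : I < #|E| by rewrite -HI -addSnnS leq_addr.
apply: IH => //; first by rewrite addSnnS.
  exact: Inv_pstep.
move=> i' j' Hi' Hj' Hc.
case: (eqVneq i' I) => [-> | Hne].
  case: Hc => [Hc | [-> _]]; last exact: Dist_pstep_self.
  apply: Dist_pstep => //; apply: HD => //; by left.
apply: Dist_pstep => //; apply: HD => //.
case: Hc => [Hc | [Hj Hi]]; first by left.
by right; split => //; rewrite ltnS leq_eqVlt (negbTE Hne) in Hi.
Qed.

Lemma jloop_ok r : forall st J, J + r = #|E| -> Inv st ->
  (forall i' j', i' < #|E| -> j' < #|E| -> j' < J -> Dist st i' j') ->
  Inv (jloop st J r) /\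
  (forall i' j', i' < #|E| -> j' < #|E| -> Dist (jloop st J r) i' j').
Proof.
elim: r => [|r IH] st J HJ Hinv HD /=.
  rewrite addn0 in HJ; subst J; split => // i' j' Hi Hj; exact: HD.
have HJm : J < #|E| by rewrite -HJ -addSnnS leq_addr.
have [Hinv' HD'] := @iloop_ok #|E| st 0 J (add0n _) HJm Hinv
  (fun i' j' Hi Hj Hc => HD i' j' Hi Hj (match Hc with or_introl H => H | or_intror (conj _ H) => False_ind _ (notF H) end)).
apply: IH => //; first by rewrite addSnnS.
move=> i' j' Hi Hj; rewrite ltnS leq_eqVlt => /orP [/eqP -> | Hlt].
  apply: HD' => //; by right.
apply: HD' => //; by left.
Qed.

Lemma ploop_ok r : forall (st : {set 'I_n} * nat) X, X + r = n -> #|st.1| = st.2 -> st.2 <= k ->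
  (st.2 = k \/ forall y : 'I_n, val y < X -> y \in st.1) ->
  [/\ #|(ploop st X r).1| = (ploop st X r).2, (ploop st X r).2 <= k,
      st.1 \subset (ploop st X r).1 &
      ((ploop st X r).2 = k \/ forall y : 'I_n, y \in (ploop st X r).1)].
Proof.
elim: r => [|r IH] [C cnt] X HX H1 H2 H3; rewrite /= in H1 H2 H3.
  rewrite addn0 in HX; subst X; split => //; case: H3 => H3; [by left | right].
  move=> y; apply: H3; exact: ltn_ord.
have -> : ploop (C, cnt) X r.+1 = ploop (padstep (C, cnt) X) X.+1 r by [].
have HXn : X < n by rewrite -HX -addSnnS leq_addr.
have HX' : X.+1 + r = n by rewrite addSnnS.
case: (eqVneq cnt k) => [Hck | Hck].
  have Hid : padstep (C, cnt) X = (C, cnt) by rewrite /padstep Hck subnn.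
  rewrite Hid; have [G1 G2 G3 G4] := IH (C, cnt) X.+1 HX' H1 H2 (or_introl Hck).
  by split.
have H3' : forall y : 'I_n, val y < X -> y \in C by case: H3 => // H3; rewrite H3 eqxx in Hck.
have Hk : k - cnt != 0 by rewrite subn_eq0 -ltnNge ltn_neqAle Hck H2.
case: (eqVneq (inb C X) 0) => HC.
- have -> : padstep (C, cnt) X = (addv C X, cnt.+1) by rewrite /padstep Hk HC.
  have H4 : forall y : 'I_n, val y < X.+1 -> y \in addv C X.
    move=> y; rewrite inE ltnS leq_eqVlt => /orP [/eqP -> | Hy]; first by rewrite eqxx orbT.
    by rewrite H3'.
  have H5 : #|addv C X| = cnt.+1 by rewrite addv_card // H1.
  have H6 : cnt.+1 <= k by rewrite ltn_neqAle Hck H2.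
  have [G1 G2 G3 G4] := IH (addv C X, cnt.+1) X.+1 HX' H5 H6 (or_intror H4).
  split => //; apply: subset_trans G3; exact: addv_sub.
- have -> : padstep (C, cnt) X = (C, cnt) by rewrite /padstep Hk (negbTE HC).
  have H4 : forall y : 'I_n, val y < X.+1 -> y \in C.
    move=> y; rewrite ltnS leq_eqVlt => /orP [/eqP Hy | Hy]; last by rewrite H3'.
    by move: HC; rewrite -Hy inb_ord; case: (y \in C).
  have [G1 G2 G3 G4] := IH (C, cnt) X.+1 HX' H1 H2 (or_intror H4).
  by split.
Qed.

Lemma Inv0 : Inv (set0, 0).
Proof.
split => //=; first by rewrite cards0.
case: (eqVneq E set0) => [-> | HE]; first by left; rewrite cards0.
by right; rewrite nb_set0.
Qed.

Theorem model_ok : k <= n ->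
  let st := ploop (jloop (set0, 0) 0 #|E|) 0 n in
  #|st.1| = k /\ (k.+1 <= nb_classes E st.1 \/ #|E| <= nb_classes E st.1).
Proof.
move=> Hkn /=.
have [[I1 I2 I3] HD] := @jloop_ok #|E| (set0, 0) 0 (add0n _) Inv0 (fun _ _ _ _ H => False_ind _ (notF H)).
set st1 := jloop _ _ _ in I1 I2 I3 HD *.
have Hnb1 : k.+1 <= nb_classes E st1.1 \/ #|E| <= nb_classes E st1.1.
  case: (eqVneq st1.2 k) => [Hk | Hk].
    case: I3 => I3; [right; by rewrite I3 | left; by rewrite -Hk].
  right; rewrite (nb_full (C := st1.1)) // => A B HA HB Htr.
  have HiA : index A (enum E) < #|E| by rewrite cardE index_mem mem_enum.
  have HiB : index B (enum E) < #|E| by rewrite cardE index_mem mem_enum.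
  have eA : A = ed (index A (enum E)) by rewrite /ed nth_index // mem_enum.
  have eB : B = ed (index B (enum E)) by rewrite /ed nth_index // mem_enum.
  case: (HD _ _ HiA HiB) => [H | [H | H]].
  - by move: H; rewrite -eA -eB Htr eqxx.
  - by rewrite eA eB H.
  - by rewrite H eqxx in Hk.
have [G1 G2 G3 G4] := @ploop_ok n st1 0 (add0n _) I1 I2 (or_intror (fun y H => False_ind _ (notF H))).
set st2 := ploop _ _ _ in G1 G2 G3 G4 *.
split.
  rewrite G1; case: G4 => // G4; apply/eqP; rewrite eqn_leq G2 -G1.
  apply: leq_trans Hkn _; rewrite -[n in n <= _]card_ord; apply: subset_leq_card.
  by apply/subsetP => y _; apply: G4.
have Hm := nb_mono E G3.
case: Hnb1 => H; [left | right]; exact: leq_trans H Hm.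
Qed.
End Model.

Section Enc.
Variables (n : nat) (E : {set {set 'I_n}}) (k : nat).

Lemma enc0 : encode E k 0 = n. Proof. by []. Qed.
Lemma enc1 : encode E k 1 = #|E|. Proof. by []. Qed.
Lemma enc2 : encode E k 2 = k. Proof. by []. Qed.

Lemma enc_bit i x : i < #|E| -> x < n -> encode E k (3 + (i * n + x)) = inb (ed E i) x.
Proof.
move=> Hi Hx; rewrite /encode /= addKn.
have Hn : 0 < n by apply: leq_ltn_trans Hx.
have -> : i * n + x < #|E| * n.
  apply: leq_trans (_ : i.+1 * n <= _); first by rewrite mulSn addnC ltn_add2r.
  by rewrite leq_mul2r Hi orbT.
by rewrite modnMDl (modn_small Hx) divnMDl // (divn_small Hx) addn0.
Qed.

Lemma enc_hi a : 3 + #|E| * n <= a -> encode E k a = 0.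
Proof.
move=> Ha; rewrite /encode.
case: a Ha => [|[|[|a]]] //= Ha.
have -> : a.+3 - 3 = a by rewrite -addn3 addnK.
by rewrite ltnNge -(leq_add2l 3) Ha.
Qed.

Lemma enc_le1 a : 3 <= a -> encode E k a <= 1.
Proof.
case: a => [|[|[|a]]] //= _; rewrite /encode /=.
by case: ifP => //; case: existsP.
Qed.
End Enc.

Fixpoint steps (P : program) (s : nat) (pc : nat) (m : memory) : option (nat * memory) :=
  if s is s'.+1 then
    (match step P pc m with Some (pc', m') => steps P s' pc' m' | None => None end)
  else Some (pc, m).

Lemma exec_steps P s t pc m pc' m' :
  steps P s pc m = Some (pc', m') -> exec P (s + t) pc m = exec P t pc' m'.
Proof.
elim: s pc m => [|s IH] pc m /=; first by case=> -> ->.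
case E: (step P pc m) => [[pc1 m1]|] // H.
exact: IH.
Qed.

Lemma exec_mono P t pc m m' :
  exec P t pc m = Some m' -> forall u, t <= u -> exec P u pc m = Some m'.
Proof.
elim: t pc m => [|t IH] pc m /=.
  case E: (step P pc m) => [[pc1 m1]|] // H u _.
  by case: u => [|u] /=; rewrite E.
case E: (step P pc m) => [[pc1 m1]|] // H u Hu.
  case: u Hu => [|u] // Hu /=; rewrite E; by apply: IH.
by case: u Hu => [|u] Hu /=; rewrite E.
Qed.

Definition runs P pc m (Q : nat -> memory -> Prop) b :=
  exists s pc' m', s <= b /\ steps P s pc m = Some (pc', m') /\ Q pc' m'.

Lemma runs_done P pc m (Q : nat -> memory -> Prop) b : Q pc m -> runs P pc m Q b.
Proof. by exists 0, pc, m. Qed.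

Lemma runs_step P pc m pc' m' Q b :
  step P pc m = Some (pc', m') -> runs P pc' m' Q b -> runs P pc m Q b.+1.
Proof. move=> E [s [pc2 [m2 [Hs [Hst HQ]]]]]; exists s.+1, pc2, m2; by rewrite /= E. Qed.

Lemma runs_weaken P pc m (Q Q' : nat -> memory -> Prop) b b' :
  runs P pc m Q b -> b <= b' -> (forall pc m, Q pc m -> Q' pc m) -> runs P pc m Q' b'.
Proof.
move=> [s [pc2 [m2 [Hs [Hst HQ]]]]] Hb HQQ; exists s, pc2, m2; split; last by auto.
exact: leq_trans Hb.
Qed.

Lemma runs_wb P pc m (Q : nat -> memory -> Prop) b b' :
  runs P pc m Q b -> b <= b' -> runs P pc m Q b'.
Proof. move=> H Hb; exact: runs_weaken H Hb _. Qed.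

Lemma steps_add P s1 s2 pc m :
  steps P (s1 + s2) pc m =
  match steps P s1 pc m with Some (pc', m') => steps P s2 pc' m' | None => None end.
Proof.
elim: s1 pc m => [|s1 IH] pc m //=.
case: (step P pc m) => [[pc1 m1]|] //.
Qed.

Lemma runs_seq P pc m (Q1 Q2 : nat -> memory -> Prop) b1 b2 :
  runs P pc m Q1 b1 -> (forall pc' m', Q1 pc' m' -> runs P pc' m' Q2 b2) ->
  runs P pc m Q2 (b1 + b2).
Proof.
move=> [s [pc2 [m2 [Hs [Hst HQ]]]]] H.
have [s' [pc3 [m3 [Hs' [Hst' HQ']]]]] := H _ _ HQ.
exists (s + s'), pc3, m3; split; first exact: leq_add.
by rewrite steps_add Hst.
Qed.

Lemma runs_exec P pc m b mf :
  runs P pc m (fun pc' m' => nth IHalt P pc' = IHalt /\ m' = mf) b ->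
  forall t, b <= t -> exec P t pc m = Some mf.
Proof.
move=> [s [pc2 [m2 [Hs [Hst [Hh Hm]]]]]] t Ht; subst m2.
apply: (@exec_mono _ (s + 0)); last by rewrite addn0; exact: leq_trans Hs Ht.
rewrite (exec_steps _ Hst) /=.
by rewrite /step Hh.
Qed.

Definition V := 18.
Definition mem_of (rs : seq nat) (H : memory) : memory :=
  fun a => if a < V then nth 0 rs a else H a.

Lemma mem_of_hi rs H a : V <= a -> mem_of rs H a = H a.
Proof. by rewrite /mem_of ltnNge => ->. Qed.

Lemma mem_of_lo rs H a : a < V -> mem_of rs H a = nth 0 rs a.
Proof. by rewrite /mem_of => ->. Qed.

Lemma upd_lo rs H r v : r < V -> upd (mem_of rs H) r v = mem_of (set_nth 0 rs r v) H.
Proof.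
move=> Hr; apply: functional_extensionality => a.
rewrite /upd /mem_of nth_set_nth /=.
case: (eqVneq a r) => [->|//]; by rewrite Hr.
Qed.

Lemma upd_hi rs H p v : V <= p -> upd (mem_of rs H) p v = mem_of rs (upd H p v).
Proof.
move=> Hp; apply: functional_extensionality => a.
rewrite /upd /mem_of.
case: (eqVneq a p) => [->|//]; by rewrite ltnNge Hp.
Qed.

Definition code_at (P : program) (o : nat) (c : program) :=
  forall i, i < size c -> nth IHalt P (o + i) = nth IHalt c i.

Lemma code_at_catl P o c1 c2 : code_at P o (c1 ++ c2) -> code_at P o c1.
Proof.
move=> H i Hi; rewrite H ?size_cat ?nth_cat ?Hi //; exact: ltn_addr.
Qed.

Lemma code_at_catr P o c1 c2 : code_at P o (c1 ++ c2) -> code_at P (o + size c1) c2.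
Proof.
move=> H i Hi; rewrite -addnA H ?size_cat ?ltn_add2l // nth_cat.
by rewrite ltnNge leq_addr /= addKn.
Qed.

Lemma code_at_cons P o i c : code_at P o (i :: c) -> code_at P o.+1 c.
Proof.
move=> H j Hj; have := H j.+1; rewrite addnS addSn /=; by apply.
Qed.

Section StepLemmas.
End StepLemmas.

Lemma S_const P o code c r v rs H Q b :
  code_at P o code -> c < size code -> nth IHalt code c = IConst r v -> r < V ->
  runs P (o + c.+1) (mem_of (set_nth 0 rs r v) H) Q b ->
  runs P (o + c) (mem_of rs H) Q b.+1.
Proof.
move=> Hc Hs Hi Hr; apply: runs_step.
by rewrite /step Hc // Hi upd_lo // addnS.
Qed.

Lemma S_add P o code c r a1 a2 rs H Q b :
  code_at P o code -> c < size code -> nth IHalt code c = IAdd r a1 a2 -> r < V ->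
  a1 < V -> a2 < V ->
  runs P (o + c.+1) (mem_of (set_nth 0 rs r (nth 0 rs a1 + nth 0 rs a2)) H) Q b ->
  runs P (o + c) (mem_of rs H) Q b.+1.
Proof.
move=> Hc Hs Hi Hr H1 H2; apply: runs_step.
by rewrite /step Hc // Hi upd_lo // !mem_of_lo // addnS.
Qed.

Lemma S_sub P o code c r a1 a2 rs H Q b :
  code_at P o code -> c < size code -> nth IHalt code c = ISub r a1 a2 -> r < V ->
  a1 < V -> a2 < V ->
  runs P (o + c.+1) (mem_of (set_nth 0 rs r (nth 0 rs a1 - nth 0 rs a2)) H) Q b ->
  runs P (o + c) (mem_of rs H) Q b.+1.
Proof.
move=> Hc Hs Hi Hr H1 H2; apply: runs_step.
by rewrite /step Hc // Hi upd_lo // !mem_of_lo // addnS.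
Qed.

Lemma S_load P o code c r a rs H Q b :
  code_at P o code -> c < size code -> nth IHalt code c = ILoad r a -> r < V ->
  a < V -> V <= nth 0 rs a ->
  runs P (o + c.+1) (mem_of (set_nth 0 rs r (H (nth 0 rs a))) H) Q b ->
  runs P (o + c) (mem_of rs H) Q b.+1.
Proof.
move=> Hc Hs Hi Hr H1 H2; apply: runs_step.
by rewrite /step Hc // Hi upd_lo // (mem_of_lo _ _ H1) (mem_of_hi _ _ H2) addnS.
Qed.

Lemma S_loadlo P o code c r a rs H Q b :
  code_at P o code -> c < size code -> nth IHalt code c = ILoad r a -> r < V ->
  a < V ->
  runs P (o + c.+1) (mem_of (set_nth 0 rs r (mem_of rs H (nth 0 rs a))) H) Q b ->
  runs P (o + c) (mem_of rs H) Q b.+1.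
Proof.
move=> Hc Hs Hi Hr H1; apply: runs_step.
by rewrite /step Hc // Hi upd_lo // (mem_of_lo _ _ H1) addnS.
Qed.

Lemma S_store P o code c a1 a2 rs H Q b :
  code_at P o code -> c < size code -> nth IHalt code c = IStore a1 a2 ->
  a1 < V -> a2 < V -> V <= nth 0 rs a1 ->
  runs P (o + c.+1) (mem_of rs (upd H (nth 0 rs a1) (nth 0 rs a2))) Q b ->
  runs P (o + c) (mem_of rs H) Q b.+1.
Proof.
move=> Hc Hs Hi H1 H2 H3; apply: runs_step.
by rewrite /step Hc // Hi !mem_of_lo // upd_hi // addnS.
Qed.

Lemma S_jzt P o code c a t rs H Q b :
  code_at P o code -> c < size code -> nth IHalt code c = IJz a t -> a < V ->
  nth 0 rs a = 0 ->
  runs P t (mem_of rs H) Q b ->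
  runs P (o + c) (mem_of rs H) Q b.+1.
Proof.
move=> Hc Hs Hi H1 H2; apply: runs_step.
by rewrite /step Hc // Hi mem_of_lo // H2.
Qed.

Lemma S_jzf P o code c a t rs H Q b :
  code_at P o code -> c < size code -> nth IHalt code c = IJz a t -> a < V ->
  nth 0 rs a <> 0 ->
  runs P (o + c.+1) (mem_of rs H) Q b ->
  runs P (o + c) (mem_of rs H) Q b.+1.
Proof.
move=> Hc Hs Hi H1 H2; apply: runs_step.
by rewrite /step Hc // Hi mem_of_lo // (negbTE (introN eqP H2)) addnS.
Qed.

Ltac code_of Hc := match type of Hc with code_at _ _ ?c => c end.
Ltac norm := cbn [set_nth nth].
Ltac stp Hc :=
  lazymatch goal with
  | |- runs _ (_ + ?c) (mem_of _ _) _ _ =>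
    let code := code_of Hc in
    let i := eval cbn in (nth IHalt code c) in
    lazymatch i with
    | IConst _ _ => eapply (@S_const _ _ _ c _ _ _ _ _ _ Hc); [reflexivity|reflexivity|reflexivity|norm]
    | IAdd _ _ _ => eapply (@S_add _ _ _ c _ _ _ _ _ _ _ Hc);
                    [reflexivity|reflexivity|reflexivity|reflexivity|reflexivity|norm]
    | ISub _ _ _ => eapply (@S_sub _ _ _ c _ _ _ _ _ _ _ Hc);
                    [reflexivity|reflexivity|reflexivity|reflexivity|reflexivity|norm]
    | ILoad _ _ => eapply (@S_load _ _ _ c _ _ _ _ _ _ Hc);
                    [reflexivity|reflexivity|reflexivity|reflexivity|norm|norm]
    | IStore _ _ => eapply (@S_store _ _ _ c _ _ _ _ _ _ Hc);
                    [reflexivity|reflexivity|reflexivity|reflexivity|norm|norm]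
    end
  end.
Ltac jt Hc := eapply (S_jzt Hc); [reflexivity|reflexivity|reflexivity|norm|norm].
Ltac jf Hc := eapply (S_jzf Hc); [reflexivity|reflexivity|reflexivity|norm|norm].

Definition main_code (o : nat) : program := [::
(*0*)  IConst 3 1; IConst 4 0; IAdd 5 0 1; IConst 17 3; IAdd 17 17 0;
(*5*)  IAdd 12 0 3; ILoad 1 12; IAdd 12 12 3; ILoad 2 12; ILoad 0 0;
(*10*) IConst 6 0; IConst 7 0; IAdd 8 17 4;
(*13 JLOOP*) ISub 12 1 7; IJz 12 (o + 55);
(*15*) IConst 9 0; IAdd 10 17 4;
(*17 ILOOP*) ISub 12 1 9; IJz 12 (o + 52);
(*19*) IConst 15 0; IConst 16 0; IConst 11 0;
(*22 XLOOP*) ISub 12 0 11; IJz 12 (o + 40);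
(*24*) IAdd 12 10 11; ILoad 12 12; IAdd 13 8 11; ILoad 13 13;
(*28*) ISub 14 12 13; ISub 13 13 12; IAdd 14 14 13; IJz 14 (o + 38);
(*32*) IAdd 12 5 11; ILoad 12 12; IJz 12 (o + 37);
(*35*) IConst 15 1; IJz 4 (o + 38);
(*37 XSEP*) IAdd 16 11 3;
(*38 XNEXT*) IAdd 11 11 3; IJz 4 (o + 22);
(*40 XDONE*) IJz 15 (o + 42); IJz 4 (o + 49);
(*42*) IJz 16 (o + 49); ISub 12 2 6; IJz 12 (o + 49);
(*45*) IAdd 12 5 16; ISub 12 12 3; IStore 12 3; IAdd 6 6 3;
(*49 INEXT*) IAdd 9 9 3; IAdd 10 10 0; IJz 4 (o + 17);
(*52 IDONE*) IAdd 7 7 3; IAdd 8 8 0; IJz 4 (o + 13);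
(*55 JDONE*) IConst 11 0;
(*56 PLOOP*) ISub 12 0 11; IJz 12 (o + 68); ISub 12 2 6; IJz 12 (o + 68);
(*60*) IAdd 12 5 11; ILoad 13 12; IJz 13 (o + 64); IJz 4 (o + 66);
(*64 PADD*) IStore 12 3; IAdd 6 6 3;
(*66 PNEXT*) IAdd 11 11 3; IJz 4 (o + 56);
(*68 PDONE*) IConst 11 18;
(*69 OLOOP*) ISub 12 0 11; IJz 12 (o + 76);
(*71*) IAdd 12 5 11; ILoad 12 12; IStore 11 12; IAdd 11 11 3; IJz 4 (o + 69);
(*76 ODONE*) IAdd 0 5 4;
(*77*) IConst 17 17; IAdd 17 17 0; ILoad 17 17;
 IConst 16 16; IAdd 16 16 0; ILoad 16 16;
 IConst 15 15; IAdd 15 15 0; ILoad 15 15;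
 IConst 14 14; IAdd 14 14 0; ILoad 14 14;
 IConst 13 13; IAdd 13 13 0; ILoad 13 13;
 IConst 12 12; IAdd 12 12 0; ILoad 12 12;
 IConst 11 11; IAdd 11 11 0; ILoad 11 11;
 IConst 10 10; IAdd 10 10 0; ILoad 10 10;
 IConst 9 9; IAdd 9 9 0; ILoad 9 9;
 IConst 8 8; IAdd 8 8 0; ILoad 8 8;
 IConst 7 7; IAdd 7 7 0; ILoad 7 7;
 IConst 6 6; IAdd 6 6 0; ILoad 6 6;
 IConst 5 5; IAdd 5 5 0; ILoad 5 5;
 IConst 4 4; IAdd 4 4 0; ILoad 4 4;
 IConst 3 3; IAdd 3 3 0; ILoad 3 3;
 IConst 2 2; IAdd 2 2 0; ILoad 2 2;
 IConst 1 1; IAdd 1 1 0; ILoad 1 1;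
(*128*) ILoad 0 0; IHalt ].

Lemma main_size o : size (main_code o) = 130. Proof. by []. Qed.

Lemma dfbS n (C A B : {set 'I_n}) X : X < n ->
  dfb C A B X.+1 = dfb C A B X || ((inb C X == 1) && (inb A X != inb B X)).
Proof.
move=> HX; rewrite /dfb; apply/existsP/orP => [[y /and3P [Hy HyC Hne]] | [/existsP [y /and3P [Hy HyC Hne]] | /andP [HC Hne]]].
- move: Hy; rewrite ltnS leq_eqVlt => /orP [/eqP Hy | Hy].
    right; move: HyC Hne; rewrite -Hy !inb_ord => -> /=.
    by case: (y \in A); case: (y \in B).
  by left; apply/existsP; exists y; rewrite Hy HyC Hne.
- by exists y; rewrite ltnS ltnW // HyC Hne.
- exists (Ordinal HX); move: HC Hne; rewrite -[X]/(val (Ordinal HX)) !inb_ord /= ltnSn.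
  by case: (Ordinal HX \in C) => //= _; case: (Ordinal HX \in A); case: (Ordinal HX \in B).
Qed.

Lemma dfb0 n (C A B : {set 'I_n}) : dfb C A B 0 = false.
Proof. by apply/existsP => [[y /and3P []]]. Qed.

Section Main.
Variables (P : program) (o : nat) (n : nat) (E : {set {set 'I_n}}) (k B : nat).
Hypothesis Hc : code_at P o (main_code o).
Hypothesis HB : 18 + n <= B.
Let m := #|E|.
Let L := 3 + m * n.
Let CB := B + L.
Let R0 := B + 3.

Definition HOK (H : memory) (C : {set 'I_n}) :=
  (forall a, a < L -> H (B + a) = encode E k a) /\ (forall x, H (CB + x) = inb C x).

Lemma HOK_bit H C i x : HOK H C -> i < m -> x < n -> H (R0 + i * n + x) = inb (ed E i) x.
Proof.
move=> [H1 _] Hi Hx; rewrite -(enc_bit k Hi Hx) -H1.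
  by rewrite /R0 !addnA.
have : i.+1 * n <= m * n by rewrite leq_mul2r Hi orbT.
rewrite /L mulSn; lia.
Qed.

Definition xpost (C : {set 'I_n}) cnt I J (Hm : memory) : nat -> memory -> Prop :=
  fun pc mm => pc = o + 40 /\ exists t12 t13 t14,
   mm = mem_of [:: n; m; k; 1; 0; CB; cnt; J; R0 + J * n; I; R0 + I * n; n; t12; t13; t14;
                  nat_of_bool (dfb C (ed E I) (ed E J) n); spf C (ed E I) (ed E J) n; R0] Hm.

Lemma xloop_ok r : forall C cnt I J X H t12 t13 t14 df sp,
  X + r = n -> I < m -> J < m -> HOK H C ->
  df = nat_of_bool (dfb C (ed E I) (ed E J) X) -> sp = spf C (ed E I) (ed E J) X ->
  runs P (o + 22)
   (mem_of [:: n; m; k; 1; 0; CB; cnt; J; R0 + J * n; I; R0 + I * n; X; t12; t13; t14;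
                  df; sp; R0] H)
   (xpost C cnt I J H) (2 + 17 * r).
Proof.
elim: r => [|r IH] C cnt I J X H t12 t13 t14 df sp HX HI HJ HH Hdf Hsp.
  rewrite addn0 in HX; subst X.
  stp Hc. jt Hc. by rewrite subnn. apply: runs_done; split => //.
  by exists (n - n), t13, t14; rewrite Hdf Hsp.
have HXn : X < n by lia.
have -> : 2 + 17 * r.+1 = 19 + 17 * r by lia.
stp Hc. jf Hc; first lia.
stp Hc. stp Hc; first (rewrite /R0 /V; lia). rewrite (HOK_bit HH HI HXn).
stp Hc. stp Hc; first (rewrite /R0 /V; lia). rewrite (HOK_bit HH HJ HXn).
stp Hc. stp Hc. stp Hc.
have Hb1 := inb_le1 (ed E I) X; have Hb2 := inb_le1 (ed E J) X.
case: (eqVneq (inb (ed E I) X) (inb (ed E J) X)) => Hb.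
- jt Hc; first by rewrite Hb subnn.
  stp Hc. jt Hc; first done. rewrite addn1.
  apply: runs_wb; first apply: IH => //; try lia.
  + by rewrite Hdf dfbS // Hb eqxx andbF orbF.
  + by rewrite Hsp /= Hb eqxx.
- jf Hc; first by move: Hb; case: (inb (ed E I) X) Hb1 => [|[|]] //; case: (inb (ed E J) X) Hb2 => [|[|]].
  have HH2 := HH.2.
  stp Hc. stp Hc; first (rewrite /CB /V; lia). rewrite HH2.
  case: (eqVneq (inb C X) 0) => HC.
  + jt Hc; first done. stp Hc. stp Hc. jt Hc; first done. rewrite addn1.
    apply: runs_wb; first apply: IH => //; try lia.
    * by rewrite Hdf dfbS // HC /= orbF.
    * by rewrite /= Hb HC.
  + jf Hc; first by apply/eqP. stp Hc. jt Hc; first done. stp Hc. jt Hc; first done. rewrite addn1.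
    apply: runs_wb; first apply: IH => //; try lia.
    * have HC1 : inb C X == 1 by move: HC (inb_le1 C X); case: (inb C X) => [|[|]].
      by rewrite dfbS // HC1 Hb orbT.
    * by rewrite Hsp /= Hb /= (negbTE HC).
Qed.

Lemma HOK_add H C s : HOK H C -> s < n -> HOK (upd H (CB + s) 1) (addv C s).
Proof.
move=> [H1 H2] Hs; split.
  move=> a Ha; rewrite /upd; case: eqP => [Heq | _]; last exact: H1.
  by move: Heq; rewrite /CB; lia.
move=> x; rewrite /upd inb_addv //.
case: (eqVneq x s) => [-> | Hxs]; first by rewrite eqxx.
case: eqP => [Heq | _]; last exact: H2.
by move: Hxs; rewrite (addnI Heq) eqxx.
Qed.

Definition ipost J (fin : {set 'I_n} * nat) : nat -> memory -> Prop :=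
  fun pc mm => pc = o + 52 /\ exists H' t11 t12 t13 t14 t15 t16, HOK H' fin.1 /\
   mm = mem_of [:: n; m; k; 1; 0; CB; fin.2; J; R0 + J * n; m; R0 + m * n; t11; t12; t13; t14;
                  t15; t16; R0] H'.

Lemma iloop_prog r : forall C cnt I J H t11 t12 t13 t14 t15 t16,
  I + r = m -> J < m -> HOK H C ->
  runs P (o + 17)
   (mem_of [:: n; m; k; 1; 0; CB; cnt; J; R0 + J * n; I; R0 + I * n; t11; t12; t13; t14;
                  t15; t16; R0] H)
   (ipost J (iloop E k (C, cnt) J I r)) (2 + r * (18 + 17 * n)).
Proof.
elim: r => [|r IH] C cnt I J H t11 t12 t13 t14 t15 t16 HI HJ HH.
  rewrite addn0 in HI; subst I.
  stp Hc. jt Hc. by rewrite subnn. apply: runs_done; split => //.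
  by exists H, t11, (m - m), t13, t14, t15, t16.
have HIm : I < m by lia.
set X := 18 + 17 * n.
apply: runs_wb (_ : runs _ _ _ _ (5 + ((2 + 17 * n) + (11 + (2 + r * X))))) _; last first.
  rewrite mulSn /X; lia.
stp Hc. jf Hc; first lia. stp Hc. stp Hc. stp Hc.
apply: runs_seq; first apply: (@xloop_ok n C cnt I J 0 H) => //; try by rewrite dfb0.
move=> pc' mm [-> [u12 [u13 [u14 ->]]]].
have -> : iloop E k (C, cnt) J I r.+1 = iloop E k (pstep E k (C, cnt) I J) J I.+1 r by [].
have HR : R0 + I * n + n = R0 + I.+1 * n by rewrite mulSnr addnA.
case Hdf: (dfb C (ed E I) (ed E J) n).
  have -> : pstep E k (C, cnt) I J = (C, cnt) by rewrite /pstep Hdf.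
  jf Hc; first done. jt Hc; first done. stp Hc. stp Hc. jt Hc; first done.
  rewrite addn1 HR; apply: runs_wb; first apply: IH => //; try lia.
jt Hc; first done.
case: (eqVneq (spf C (ed E I) (ed E J) n) 0) => Hs.
  have -> : pstep E k (C, cnt) I J = (C, cnt) by rewrite /pstep Hdf Hs.
  jt Hc; first done. stp Hc. stp Hc. jt Hc; first done.
  rewrite addn1 HR; apply: runs_wb; first apply: IH => //; try lia.
jf Hc; first by apply/eqP. stp Hc.
case: (eqVneq (k - cnt) 0) => Hk.
  have -> : pstep E k (C, cnt) I J = (C, cnt) by rewrite /pstep Hdf Hs Hk.
  jt Hc; first done. stp Hc. stp Hc. jt Hc; first done.
  rewrite addn1 HR; apply: runs_wb; first apply: IH => //; try lia.
have -> : pstep E k (C, cnt) I J = (addv C (spf C (ed E I) (ed E J) n).-1, cnt.+1)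
  by rewrite /pstep Hdf Hs Hk.
have [s Hs'] : exists s, spf C (ed E I) (ed E J) n = s.+1
  by move: Hs; case: (spf _ _ _ _) => [|s] //; exists s.
have [Hsn _ _] := spf_succ Hs'.
rewrite Hs' /=.
jf Hc; first by apply/eqP. stp Hc. stp Hc.
have -> : CB + s.+1 - 1 = CB + s by lia.
stp Hc; first (rewrite /CB /V; lia).
stp Hc. stp Hc. stp Hc. jt Hc; first done.
rewrite !addn1 HR; apply: runs_wb; first apply: IH => //; try lia.
  exact: HOK_add.
Qed.

Definition jpost (fin : {set 'I_n} * nat) : nat -> memory -> Prop :=
  fun pc mm => pc = o + 55 /\ exists H' t9 t10 t11 t12 t13 t14 t15 t16, HOK H' fin.1 /\
   mm = mem_of [:: n; m; k; 1; 0; CB; fin.2; m; R0 + m * n; t9; t10; t11; t12; t13; t14;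
                  t15; t16; R0] H'.

Lemma jloop_prog r : forall C cnt J H t9 t10 t11 t12 t13 t14 t15 t16,
  J + r = m -> HOK H C ->
  runs P (o + 13)
   (mem_of [:: n; m; k; 1; 0; CB; cnt; J; R0 + J * n; t9; t10; t11; t12; t13; t14;
                  t15; t16; R0] H)
   (jpost (jloop E k (C, cnt) J r)) (2 + r * (9 + m * (18 + 17 * n))).
Proof.
elim: r => [|r IH] C cnt J H t9 t10 t11 t12 t13 t14 t15 t16 HJ HH.
  rewrite addn0 in HJ; subst J.
  stp Hc. jt Hc. by rewrite subnn. apply: runs_done; split => //.
  by exists H, t9, t10, t11, (m - m), t13, t14, t15, t16.
have HJm : J < m by lia.
set X := 18 + 17 * n.
apply: runs_wb (_ : runs _ _ _ _ (4 + ((2 + m * X) + (3 + (2 + r * (9 + m * X)))))) _; last first.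
  rewrite mulSn; set Y := m * X; set Z := r * _; lia.
stp Hc. jf Hc; first lia. stp Hc. stp Hc.
apply: runs_seq; first by apply: (@iloop_prog m C cnt 0 J H).
move=> pc' mm [-> [H' [u11 [u12 [u13 [u14 [u15 [u16 [HH' ->]]]]]]]]].
have -> : jloop E k (C, cnt) J r.+1 = jloop E k (iloop E k (C, cnt) J 0 #|E|) J.+1 r by [].
have HR : R0 + J * n + n = R0 + J.+1 * n by rewrite mulSnr addnA.
case: (iloop E k (C, cnt) J 0 #|E|) HH' => C' cnt' /= HH'.
stp Hc. stp Hc. jt Hc; first done.
rewrite addn1 HR; apply: runs_wb; first apply: IH => //; try lia.
Qed.

Lemma ploop_id (C : {set 'I_n}) X r : ploop k (C, k) X r = (C, k).
Proof. elim: r X => [|r IH] X //=; by rewrite subnn /= IH. Qed.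

Definition ppost (fin : {set 'I_n} * nat) : nat -> memory -> Prop :=
  fun pc mm => pc = o + 68 /\ exists H' t7 t8 t9 t10 t11 t12 t13 t14 t15 t16, HOK H' fin.1 /\
   mm = mem_of [:: n; m; k; 1; 0; CB; fin.2; t7; t8; t9; t10; t11; t12; t13; t14;
                  t15; t16; R0] H'.

Lemma ploop_prog r : forall C cnt X H t7 t8 t9 t10 t12 t13 t14 t15 t16,
  X + r = n -> HOK H C -> cnt <= k ->
  runs P (o + 56)
   (mem_of [:: n; m; k; 1; 0; CB; cnt; t7; t8; t9; t10; X; t12; t13; t14;
                  t15; t16; R0] H)
   (ppost (ploop k (C, cnt) X r)) (4 + 11 * r).
Proof.
elim: r => [|r IH] C cnt X H t7 t8 t9 t10 t12 t13 t14 t15 t16 HX HH Hk.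
  rewrite addn0 in HX; subst X.
  stp Hc. jt Hc. by rewrite subnn. apply: runs_done; split => //.
  by exists H, t7, t8, t9, t10, n, (n - n), t13, t14, t15, t16.
have HXn : X < n by lia.
have -> : ploop k (C, cnt) X r.+1 = ploop k (padstep k (C, cnt) X) X.+1 r by [].
have -> : 4 + 11 * r.+1 = 15 + 11 * r by lia.
stp Hc. jf Hc; first lia. stp Hc.
case: (eqVneq (k - cnt) 0) => Hkc.
  have Hck : cnt = k by lia.
  subst cnt; rewrite /padstep Hkc /= ploop_id.
  jt Hc; first done. apply: runs_done; split => //.
  by exists H, t7, t8, t9, t10, X, 0, t13, t14, t15, t16.
jf Hc; first by apply/eqP.
have HH2 := HH.2.
stp Hc. stp Hc; first (rewrite /CB /V; lia). rewrite HH2.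
case: (eqVneq (inb C X) 0) => HC.
- have -> : padstep k (C, cnt) X = (addv C X, cnt.+1) by rewrite /padstep Hkc HC.
  jt Hc; first done. stp Hc; first (rewrite /CB /V; lia). stp Hc. stp Hc. jt Hc; first done.
  rewrite !addn1; apply: runs_wb; first apply: IH => //; try lia.
  exact: HOK_add.
- have -> : padstep k (C, cnt) X = (C, cnt) by rewrite /padstep Hkc (negbTE HC).
  jf Hc; first by apply/eqP. jt Hc; first done. stp Hc. jt Hc; first done.
  rewrite !addn1; apply: runs_wb; first apply: IH => //; try lia.
Qed.

Definition opost (C : {set 'I_n}) : nat -> memory -> Prop :=
  fun pc mm => pc = o + 76 /\ exists H' t6 t7 t8 t9 t10 t11 t12 t13 t14 t15 t16, HOK H' C /\
   (forall y, 18 <= y < n -> H' y = inb C y) /\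
   mm = mem_of [:: n; m; k; 1; 0; CB; t6; t7; t8; t9; t10; t11; t12; t13; t14;
                  t15; t16; R0] H'.

Lemma oloop_prog r : forall C X H t6 t7 t8 t9 t10 t12 t13 t14 t15 t16,
  X + r = n -> 18 <= X -> HOK H C -> (forall y, 18 <= y < X -> H y = inb C y) ->
  runs P (o + 69)
   (mem_of [:: n; m; k; 1; 0; CB; t6; t7; t8; t9; t10; X; t12; t13; t14;
                  t15; t16; R0] H)
   (opost C) (2 + 7 * r).
Proof.
elim: r => [|r IH] C X H t6 t7 t8 t9 t10 t12 t13 t14 t15 t16 HX HX18 HH Hout.
  rewrite addn0 in HX; subst X.
  stp Hc. jt Hc. by rewrite subnn. apply: runs_done; split => //.
  by exists H, t6, t7, t8, t9, t10, n, (n - n), t13, t14, t15, t16.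
have HXn : X < n by lia.
have -> : 2 + 7 * r.+1 = 9 + 7 * r by lia.
have HH2 := HH.2.
stp Hc. jf Hc; first lia. stp Hc. stp Hc; first (rewrite /CB /V; lia). rewrite HH2.
stp Hc; first (rewrite /V; lia). stp Hc. jt Hc; first done.
rewrite addn1; apply: IH => //; try lia.
- case: HH => H1 H2; split.
    move=> a Ha; rewrite /upd; case: eqP => [Heq|_]; last exact: H1.
    lia.
  move=> x; rewrite /upd; case: eqP => [Heq|_]; last exact: H2.
  rewrite /CB /L in Heq; lia.
- move=> y Hy; rewrite /upd; case: eqP => [-> //|Hne].
  apply: Hout; lia.
Qed.

Lemma oloop_prog0 C H t6 t7 t8 t9 t10 t12 t13 t14 t15 t16 :
  n <= 18 -> HOK H C ->
  runs P (o + 69)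
   (mem_of [:: n; m; k; 1; 0; CB; t6; t7; t8; t9; t10; 18; t12; t13; t14;
                  t15; t16; R0] H)
   (opost C) 2.
Proof.
move=> Hn HH.
stp Hc. jt Hc; first lia. apply: runs_done; split => //.
exists H, t6, t7, t8, t9, t10, 18, (n - 18), t13, t14, t15, t16; split => //; split => //.
move=> y Hy; lia.
Qed.

Lemma init_prog H t2 t3 t4 t5 t6 t7 t8 t9 t10 t11 t12 t13 t14 t15 t16 t17 :
  (forall a, H (B + a) = encode E k a) ->
  runs P (o + 0)
   (mem_of [:: B; L; t2; t3; t4; t5; t6; t7; t8; t9; t10; t11; t12; t13; t14; t15; t16; t17] H)
   (fun pc mm => pc = o + 13 /\ HOK H set0 /\ exists u9 u10 u11 u12 u13 u14 u15 u16,
      mm = mem_of [:: n; m; k; 1; 0; CB; 0; 0; R0 + 0 * n; u9; u10; u11; u12; u13; u14;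
                  u15; u16; R0] H) 13.
Proof.
move=> HH.
have HB0 : H B = n by rewrite -[B]addn0 HH.
have HB1 : H (B + 1) = m by rewrite HH.
have HB2 : H (B + 1 + 1) = k by rewrite -addnA HH.
stp Hc. stp Hc. stp Hc. stp Hc. stp Hc. stp Hc. stp Hc; first (rewrite /V; lia).
rewrite HB1. stp Hc. stp Hc; first (rewrite /V; lia). rewrite HB2.
stp Hc; first (rewrite /V; lia). rewrite HB0. stp Hc. stp Hc. stp Hc.
apply: runs_done; split => //; split.
  split => [a Ha | x]; first exact: HH.
  rewrite /CB -addnA HH enc_hi; last by rewrite /L; lia.
  by rewrite /inb; case: existsP => // [[y /andP [_]]]; rewrite inE.
exists t9, t10, t11, (B + 1 + 1), t13, t14, t15, t16.
by rewrite (addnC 3 B).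
Qed.

Ltac stpa Hc := stp Hc; try (rewrite /CB /L /R0 /V; lia).

Lemma tail_prog C H t6 t7 t8 t9 t10 t11 t12 t13 t14 t15 t16 :
  HOK H C -> (forall y, 18 <= y < n -> H y = inb C y) ->
  runs P (o + 76)
   (mem_of [:: n; m; k; 1; 0; CB; t6; t7; t8; t9; t10; t11; t12; t13; t14;
                  t15; t16; R0] H)
   (fun pc mm => nth IHalt P pc = IHalt /\ forall x, x < n -> mm x = inb C x) 53.
Proof.
move=> [H1 H2] Hout.
do 53 stpa Hc.
apply: runs_done; split; first by rewrite Hc.
move=> x Hx; rewrite /mem_of.
case: ifP => Hx18; last by apply: Hout; rewrite /V in Hx18; lia.
rewrite -H2 /V in Hx18 *.
by do 18 (case: x Hx Hx18 => [|x] Hx Hx18; first by rewrite /= ?addn0 ?(addnC _ CB)).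
Qed.

Lemma main_prog H t2 t3 t4 t5 t6 t7 t8 t9 t10 t11 t12 t13 t14 t15 t16 t17 :
  (forall a, H (B + a) = encode E k a) -> k <= n ->
  runs P (o + 0)
   (mem_of [:: B; L; t2; t3; t4; t5; t6; t7; t8; t9; t10; t11; t12; t13; t14; t15; t16; t17] H)
   (fun pc mm => nth IHalt P pc = IHalt /\
      forall x, x < n -> mm x = inb (ploop k (jloop E k (set0, 0) 0 #|E|) 0 n).1 x)
   (13 + ((2 + m * (9 + m * (18 + 17 * n))) + (1 + ((4 + 11 * n) + (1 + ((2 + 7 * n) + 53)))))).
Proof.
move=> HH Hkn.
apply: runs_seq; first exact: init_prog.
move=> pc mm [-> [HH0 [u9 [u10 [u11 [u12 [u13 [u14 [u15 [u16 ->]]]]]]]]]].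
apply: runs_seq; first by apply: (@jloop_prog m set0 0 0).
move=> pc' mm' [-> [H' [v9 [v10 [v11 [v12 [v13 [v14 [v15 [v16 [HH' ->]]]]]]]]]]].
have [[I1 I2 I3] _] := @jloop_ok n E k #|E| (set0, 0) 0 (add0n _) (Inv0 E k)
   (fun _ _ _ _ H => False_ind _ (notF H)).
case: (jloop E k (set0, 0) 0 #|E|) I1 I2 I3 HH' => C1 cnt1 /= I1 I2 I3 HH'.
stp Hc.
apply: runs_seq; first by apply: (@ploop_prog n C1 cnt1 0).
move=> pc2 mm2 [-> [H2 [w7 [w8 [w9 [w10 [w11 [w12 [w13 [w14 [w15 [w16 [HH2 ->]]]]]]]]]]]]].
stp Hc.
apply: runs_seq.
  case: (leqP 18 n) => Hn.
    apply: runs_wb; first apply: (@oloop_prog (n - 18) (ploop k (C1, cnt1) 0 n).1 18 H2) => //; try lia.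
  apply: runs_wb; first apply: (@oloop_prog0 (ploop k (C1, cnt1) 0 n).1 H2) => //; try lia.
move=> pc3 mm3 [-> [H3 [x6 [x7 [x8 [x9 [x10 [x11 [x12 [x13 [x14 [x15 [x16 [HH3 [Hout ->]]]]]]]]]]]]]]].
exact: tail_prog.
Qed.
End Main.

Definition leaf (o : nat) (bs : seq bool) (mp : nat) : program := [::
(*0*) IConst 3 0; IConst 5 1; ISub 4 1 3;
(*3*) IJz 4 (o + 8); IAdd 3 3 0; ISub 4 4 5; IConst 6 0; IJz 6 (o + 3);
(*8*) IConst 7 3; IAdd 3 3 7; IConst 6 18; IAdd 6 6 3; IAdd 6 6 0; IConst 4 0;
(*14*) ISub 7 3 4; IJz 7 (o + 22); ILoad 7 4; IStore 6 7; IAdd 4 4 5; IAdd 6 6 5;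
(*20*) IConst 7 0; IJz 7 (o + 14);
(*22*) ISub 6 6 3;
(*23*) IConst 7 3; IAdd 7 7 6; IConst 4 (nth false bs 0); IStore 7 4;
(*27*) IConst 7 4; IAdd 7 7 6; IConst 4 (nth false bs 1); IStore 7 4;
(*31*) IConst 7 5; IAdd 7 7 6; IConst 4 (nth false bs 2); IStore 7 4;
(*35*) IConst 7 6; IAdd 7 7 6; IConst 4 (nth false bs 3); IStore 7 4;
(*39*) IConst 7 7; IAdd 7 7 6; IConst 4 (nth false bs 4); IStore 7 4;
(*43*) IConst 4 0; IAdd 0 6 4; IAdd 1 3 4; IJz 4 mp ].

Lemma leaf_size o bs mp : size (leaf o bs mp) = 47. Proof. by []. Qed.

Ltac stpl Hc := stp Hc; try (rewrite /V; lia).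

Section Leaf.
Variables (P : program) (o mp : nat) (bs : seq bool) (n : nat) (E : {set {set 'I_n}}) (k : nat).
Hypothesis Hc : code_at P o (leaf o bs mp).
Let m := #|E|.
Let e := encode E k.

Lemma mloop_prog c : forall acc t6 r3 H (Q : nat -> memory -> Prop) b,
  (forall t6', runs P (o + 8) (mem_of [:: n; m; k; acc + c * n; 0; 1; t6'; r3;
       e 8; e 9; e 10; e 11; e 12; e 13; e 14; e 15; e 16; e 17] H) Q b) ->
  runs P (o + 3) (mem_of [:: n; m; k; acc; c; 1; t6; r3;
       e 8; e 9; e 10; e 11; e 12; e 13; e 14; e 15; e 16; e 17] H) Q (1 + 5 * c + b).
Proof.
elim: c => [|c IH] acc t6 r3 H Q b Hk.
  jt Hc; first done. by rewrite addn0 in Hk; apply: Hk.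
have -> : 1 + 5 * c.+1 + b = 5 + (1 + 5 * c + b) by lia.
jf Hc; first done. stp Hc. stp Hc. stp Hc. jt Hc; first done.
rewrite subn1 /=; apply: IH => t6'; have -> : acc + n + c * n = acc + c.+1 * n by rewrite mulSn; lia.
exact: Hk.
Qed.

Let L := 3 + m * n.
Let Bv := 18 + L + n.

Definition Hlow (H : memory) := forall a, a < Bv -> H a = e a.
Definition Hcp (H : memory) j := forall a, (a < 3 \/ 8 <= a) -> H (Bv + a) = if a < j then e a else 0.

Lemma rd j H t7 : Hlow H -> j < L -> (j < 3 \/ 8 <= j) ->
  mem_of [:: n; m; k; L; j; 1; Bv + j; t7; e 8; e 9; e 10; e 11; e 12; e 13; e 14; e 15; e 16; e 17] H j = e j.
Proof.
move=> Hl HjL Hj; case: (ltnP j 18) => Hj18; last first.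
  rewrite mem_of_hi /V //; apply: Hl; rewrite /Bv; lia.
rewrite mem_of_lo /V //.
do 18 (case: j Hj Hj18 HjL => [|j] Hj Hj18 HjL; first by (try lia); rewrite /= ?enc0).
lia.
Qed.

Lemma cloop_prog r : forall j t7 H (Q : nat -> memory -> Prop) b,
  j + r = L -> Hlow H -> Hcp H j ->
  (forall H' t7', Hlow H' -> Hcp H' L ->
     runs P (o + 22) (mem_of [:: n; m; k; L; L; 1; Bv + L; t7';
       e 8; e 9; e 10; e 11; e 12; e 13; e 14; e 15; e 16; e 17] H') Q b) ->
  runs P (o + 14) (mem_of [:: n; m; k; L; j; 1; Bv + j; t7;
       e 8; e 9; e 10; e 11; e 12; e 13; e 14; e 15; e 16; e 17] H) Q (2 + 8 * r + b).
Proof.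
elim: r => [|r IH] j t7 H Q b Hj Hl Hcpj Hk.
  rewrite addn0 in Hj; subst j.
  stp Hc. jt Hc; first by rewrite subnn. by apply: Hk.
have HjL : j < L by lia.
have -> : 2 + 8 * r.+1 + b = 8 + (2 + 8 * r + b) by lia.
stp Hc. jf Hc; first lia.
eapply (@S_loadlo _ _ _ 16 _ _ _ _ _ _ Hc); [reflexivity|reflexivity|reflexivity|reflexivity|norm].
set v := mem_of _ H j.
stp Hc; first (rewrite /V /Bv; lia).
stp Hc. stp Hc. stp Hc. jt Hc; first done.
rewrite addn1 -addnA addn1; apply: IH => //; first lia.
- move=> a Ha; rewrite /upd; case: eqP => [Heq|_]; last exact: Hl.
  lia.
- move=> a Ha; rewrite /upd; case: eqP => [Heq|Hne].
    have -> : a = j by lia.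
    rewrite ltnSn /v rd //; lia.
  have Haj : a != j by apply/eqP => Heq; apply: Hne; rewrite Heq.
  by rewrite Hcpj //; rewrite [a < j.+1]ltnS [a <= j]leq_eqVlt (negbTE Haj).
Qed.

Hypothesis Hbits : forall i, i < 5 -> nat_of_bool (nth false bs i) = e (3 + i).

Definition leafpost : nat -> memory -> Prop :=
  fun pc mm => pc = mp /\ exists H' t3 t4 t5 t6 t7,
   (forall a, H' (Bv + a) = e a) /\
   mm = mem_of [:: Bv + 0; L + 0; k; t3; t4; t5; t6; t7;
       e 8; e 9; e 10; e 11; e 12; e 13; e 14; e 15; e 16; e 17] H'.

Lemma leaf_prog x3 x4 x5 x6 x7 :
  runs P (o + 0) (mem_of [:: n; m; k; x3; x4; x5; x6; x7;
       e 8; e 9; e 10; e 11; e 12; e 13; e 14; e 15; e 16; e 17] e) leafpost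
    (3 + (1 + 5 * m + (6 + (2 + 8 * L + 25)))).
Proof.
stp Hc. stp Hc. stp Hc. rewrite subn0.
apply: mloop_prog => t6'.
stp Hc. stp Hc. stp Hc. stp Hc. stp Hc. stp Hc.
have -> : 18 + (0 + m * n + 3) + n = Bv + 0 by rewrite /Bv /L; lia.
have -> : 0 + m * n + 3 = L by rewrite /L; lia.
apply: cloop_prog => //.
  move=> a Ha; rewrite /e enc_hi //; rewrite /Bv /L; lia.
move=> H' t7' Hl Hcpl.
stp Hc.
have -> : Bv + L - L = Bv by lia.
do 20 (stp Hc; try (rewrite /V /Bv; lia)).
stp Hc. stp Hc. stp Hc. jt Hc; first done.
apply: runs_done; split => //.
do 6 eexists; split; last reflexivity.
move=> a; rewrite /upd.
have Hb := Hbits.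
case: (ltnP a 3) => Ha3.
  rewrite !ifN_eq; try lia. by rewrite Hcpl ?Ha3 /L; [case: ifP; lia | left].
case: (ltnP a 8) => Ha8; last first.
  rewrite !ifN_eq; try lia. rewrite Hcpl; last by right.
  case: ifP => // HaL. by rewrite /e enc_hi //; rewrite /L in HaL *; lia.
have : a = 3 \/ a = 4 \/ a = 5 \/ a = 6 \/ a = 7 by lia.
case=> [->|[->|[->|[->|->]]]]; rewrite (addnC Bv) !eqn_add2r /=.
- exact: (Hb 0).
- exact: (Hb 1).
- exact: (Hb 2).
- exact: (Hb 3).
- exact: (Hb 4).
Qed.
End Leaf.

Fixpoint tsz d := if d is d'.+1 then (tsz d' + tsz d').+1 else 47.

Fixpoint tree (d o : nat) (bs : seq bool) (mp : nat) : program :=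
  if d is d'.+1 then
    IJz (3 + size bs) (o.+1 + tsz d') ::
      (tree d' o.+1 (rcons bs true) mp ++ tree d' (o.+1 + tsz d') (rcons bs false) mp)
  else leaf o bs mp.

Lemma size_tree d : forall o bs mp, size (tree d o bs mp) = tsz d.
Proof. elim: d => [|d IH] o bs mp //=; by rewrite size_cat !IH. Qed.

Lemma mem_split (M : memory) : M = mem_of (mkseq M 18) M.
Proof.
apply: FunctionalExtensionality.functional_extensionality => a.
rewrite /mem_of; case: ifP => // Ha; by rewrite nth_mkseq.
Qed.



Section Tree.
Variables (P : program) (mp : nat) (n : nat) (E : {set {set 'I_n}}) (k : nat).
Let e := encode E k.
Let LB := 3 + (1 + 5 * #|E| + (6 + (2 + 8 * (3 + #|E| * n) + 25))).

Lemma tree_prog d : forall o bs, size bs + d = 5 -> code_at P o (tree d o bs mp) ->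
  (forall i, i < size bs -> nat_of_bool (nth false bs i) = e (3 + i)) ->
  runs P o (mem_of (mkseq e 18) e) (leafpost mp E k) (d + LB).
Proof.
elim: d => [|d IH] o bs Hs Hc Hb.
  rewrite addn0 in Hs.
  rewrite -(addn0 o); apply: (leaf_prog Hc); by rewrite -Hs.
have Hsb : size bs < 5 by lia.
have Hc1 : code_at P o.+1 (tree d o.+1 (rcons bs true) mp).
  exact: code_at_catl (code_at_cons Hc).
have Hc2 : code_at P (o.+1 + tsz d) (tree d (o.+1 + tsz d) (rcons bs false) mp).
  have := code_at_catr (code_at_cons Hc); by rewrite size_tree.
have He1 := enc_le1 E k (leq_addr (size bs) 3).
rewrite -(addn0 o).
case: (eqVneq (e (3 + size bs)) 0) => He.
- eapply (@S_jzt _ _ _ 0 (3 + size bs) (o.+1 + tsz d) _ _ _ _ Hc); [done|done| | |].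
  + rewrite /V; lia.
  + by rewrite nth_mkseq //; lia.
  apply: (IH _ (rcons bs false)) => //; first by rewrite size_rcons; lia.
  move=> i; rewrite size_rcons ltnS leq_eqVlt nth_rcons => /orP [/eqP -> | Hi].
    by rewrite ltnn eqxx He.
  by rewrite Hi; apply: Hb.
- eapply (@S_jzf _ _ _ 0 (3 + size bs) (o.+1 + tsz d) _ _ _ _ Hc); [done|done| | |].
  + rewrite /V; lia.
  + by rewrite nth_mkseq //; [apply/eqP | lia].
  rewrite addn1; apply: (IH _ (rcons bs true)) => //; first by rewrite size_rcons; lia.
  move=> i; rewrite size_rcons ltnS leq_eqVlt nth_rcons => /orP [/eqP -> | Hi].
    rewrite ltnn eqxx; move: He He1; rewrite /e; case: (encode E k (3 + size bs)) => [|[|]] //.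
  by rewrite Hi; apply: Hb.
Qed.
End Tree.

Lemma runs_exec' P pc m b (R : memory -> Prop) :
  runs P pc m (fun pc' m' => nth IHalt P pc' = IHalt /\ R m') b ->
  exists mf, R mf /\ forall t, b <= t -> exec P t pc m = Some mf.
Proof.
move=> [s [pc2 [m2 [Hs [Hst [Hh HR]]]]]]; exists m2; split => // t Ht.
apply: (@runs_exec P pc m b m2) => //.
by exists s, pc2, m2.
Qed.

Definition mainpc := tsz 5.
Definition prog : program := tree 5 0 [::] mainpc ++ main_code mainpc.

Lemma code_prog_tree : code_at prog 0 (tree 5 0 [::] mainpc).
Proof. apply: (@code_at_catl prog 0 _ (main_code mainpc)) => i Hi; by rewrite add0n. Qed.

Lemma code_prog_main : code_at prog mainpc (main_code mainpc).
Proof.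
have := @code_at_catr prog 0 (tree 5 0 [::] mainpc) (main_code mainpc).
rewrite size_tree add0n; apply => i Hi; by rewrite add0n.
Qed.

Lemma card_E_le (n : nat) (E : {set {set 'I_n}}) : #|E| <= 1 + #|E| * n.
Proof.
case: n E => [|n] E.
  rewrite muln0 addn0.
  have : E \subset [set set0] by apply/subsetP => A _; rewrite inE; apply/eqP/setP => [[]].
  by move/subset_leq_card; rewrite cards1.
by rewrite mulnS; lia.
Qed.

Lemma prog_ok (n : nat) (E : {set {set 'I_n}}) (k : nat) : k <= n ->
  exists mf, decode n mf = (ploop k (jloop E k (set0, 0) 0 #|E|) 0 n).1 /\
   forall t, (input_size E k) ^ 6 <= t -> exec prog t 0 (encode E k) = Some mf.
Proof.
move=> Hkn.
set Cf := (ploop k _ _ _).1.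
have Hrun : runs prog 0 (encode E k)
  (fun pc' m' => nth IHalt prog pc' = IHalt /\ forall x, x < n -> m' x = inb Cf x)
  ((5 + (3 + (1 + 5 * #|E| + (6 + (2 + 8 * (3 + #|E| * n) + 25))))) +
   (13 + ((2 + #|E| * (9 + #|E| * (18 + 17 * n))) + (1 + ((4 + 11 * n) + (1 + ((2 + 7 * n) + 53))))))).
  rewrite (mem_split (encode E k)).
  apply: runs_seq; first by apply: (@tree_prog prog mainpc n E k 5 0 [::] (erefl 5) code_prog_tree).
  move=> pc mm [-> [H' [t3 [t4 [t5 [t6 [t7 [HH ->]]]]]]]].
  rewrite !addn0 -[mainpc]addn0.
  apply: (main_prog (B := 18 + (3 + #|E| * n) + n) code_prog_main) => //; lia.
have [mf [Hmf Hex]] := runs_exec' Hrun.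
exists mf; split.
  apply/setP => x; rewrite inE (Hmf _ (ltn_ord x)) inb_ord; by case: (x \in Cf).
move=> t Ht; apply: Hex; apply: leq_trans Ht.
rewrite /input_size; set m := #|E|.
set s := 3 + n + m * n + k.
have Hm : m <= s by have := card_E_le E; rewrite -/m /s; lia.
have Hn : n <= s by rewrite /s; lia.
have Hmn : m * n <= s by rewrite /s; lia.
have Hs3 : 3 <= s by rewrite /s; lia.
have H1 : m * (m * n) <= s * s by apply: leq_mul.
have H2 : m * m <= s * s by apply: leq_mul.
have H3 : m * (9 + m * (18 + 17 * n)) <= 9 * s + 35 * (s * s).
  have -> : m * (9 + m * (18 + 17 * n)) = 9 * m + 18 * (m * m) + 17 * (m * (m * n)) by ring.
  lia.
have H4 : s * s * 81 <= s ^ 6.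
  have -> : s ^ 6 = s * s * (s * s * (s * s)) by rewrite !expnS expn0 muln1 !mulnA.
  rewrite leq_mul2l; apply/orP; right.
  have : 9 <= s * s by apply: (@leq_mul 3 3).
  move=> H9; apply: leq_trans (_ : 9 * 9 <= _) => //; exact: leq_mul.
have H5 : s <= s * s by rewrite leq_pmulr //; lia.
lia.
Qed.

Theorem corollary3 (d : nat) (hd : 1 <= d) :
  exists (P : program) (c : nat),
    forall (n : nat) (E : {set {set 'I_n}}) (k : nat),
      vc_dim E <= d -> k <= n ->
      exists m : memory,
        exec P (input_size E k ^ c) 0 (encode E k) = Some m /\
        #|decode n m| = k /\
        opt_pvc E k ^ d <= nb_classes E (decode n m) ^ d * #|E| ^ (d - 1).
Proof.
exists prog, 6 => n E k Hd Hkn.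
have [mf [Hdec Hex]] := prog_ok E Hkn.
exists mf; split; first exact: Hex.
have [Hc Hnb] := model_ok E Hkn.
rewrite Hdec; split => //.
exact: final_bound.
Qed.
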